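(* For every $m\ge1$, $I^{(k,r)}_m=\{f\in V: u_\lambda(f)=0 \text{ (at }(\ast))\text{ for all }\lambda\in S^{(k,r)}_m\}$.
   Context: Fix integers $n\ge2$, $1\le k\le n-1$, $r\ge2$, $g=\gcd(k+1,r-1)$, $\tau=e^{2\pi\sqrt{-1}/(r-1)}$; specialization $(\ast)$: $t=u^{(r-1)/g}$, $q=\tau u^{-(k+1)/g}$; $\mathbb K$ is the field of specialized scalars and $V=\mathbb K[x_1^{\pm1},\dots,x_n^{\pm1}]$. Multi-wheel set: $Z^{(k,r)}_m$ is the set of $z\in\mathbb K^n$ for which there exist pairwise distinct indices $i_{l,a}\in\{1,\dots,n\}$ ($1\le l\le m$, $1\le a\le k+1$) and $s_{l,a}\in\mathbb Z_{\ge0}$ ($1\le a\le k$) with $z_{i_{l,a+1}}=z_{i_{l,a}}tq^{s_{l,a}}$, $\sum_{a=1}^ks_{l,a}\le r-2$ for each $l$, and $i_{l,a}<i_{l,a+1}$ whenever $s_{l,a}=0$. $I^{(k,r)}_m=\{f\in V:f(z)=0\ \forall z\in Z^{(k,r)}_m\}$. $P=\mathbb Z^n$; $\rho(\lambda)$ is the unique permutation of $(\frac{n-1}2,\dots,-\frac{n-1}2)$ with $\rho(\lambda)_i>\rho(\lambda)_j$ iff $\lambda_i>\lambda_j$ or ($\lambda_i=\lambda_j$, $i<j$); $(i_1,\dots,i_n)$ are the indices with $\rho(\lambda)_{i_a}=\frac{n+1}2-a$. $u_\lambda(f)=f(t^{-\rho(\lambda)_1}q^{-\lambda_1},\dots,t^{-\rho(\lambda)_n}q^{-\lambda_n})$.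 $(i,j)$ is a neighborhood of type $(a,b)$ in $\lambda$ if $\rho(\lambda)_i-\rho(\lambda)_j=a-1$ and either $\lambda_i-\lambda_j\le b-1$, or $\lambda_i-\lambda_j=b$ and $j<i$. A neighborhood of type $(k+1,r-1)$ has the form $(i_l,i_{l+k})$; two such, $(i_l,i_{l+k})$ and $(i_{l'},i_{l'+k})$, are distinct if $\{i_l,\dots,i_{l+k}\}\cap\{i_{l'},\dots,i_{l'+k}\}=\emptyset$. $S^{(k,r)}_m$ is the set of $\lambda\in P$ having $m$ pairwise distinct neighborhoods of type $(k+1,r-1)$. *)

(* Defs.v *)
From HB Require Import structures.
From mathcomp Require Import all_boot all_order all_algebra all_field.
From mathcomp Require Import finmap.
From mathcomp Require Import monalg fraction.

Unset Strict Implicit.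
Unset Printing Implicit Defensive.

Import Order.TTheory GRing.Theory Num.Theory.
Local Open Scope ring_scope.

(* K = algC(w), rational functions in an indeterminate w over the      *)
(* algebraic complex numbers; the specialization parameter is u = w^2  *)
(* (w is a square root of u, needed for the half-integer powers        *)
(* t^{-rho(lambda)_i} when n is even).                                  *)
Definition Kf : fieldType := {fraction {poly algC}}.
Definition toK (p : {poly algC}) : Kf := @FracField.tofrac _ p.

Definition wK : Kf := toK 'X.
Definition uK : Kf := wK ^+ 2.

Definition gg (k r : nat) : nat := gcdn k.+1 r.-1.

Definition thalf (k r : nat) : Kf := wK ^+ (r.-1 %/ gg k r).
Definition tK (k r : nat) : Kf := uK ^+ (r.-1 %/ gg k r).
Definition qK (k r : nat) (tau : algC) : Kf :=
  toK tau%:P * uK ^- (k.+1 %/ gg k r).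

(* Laurent polynomials V = K[x_1^{+-1},...,x_n^{+-1}]: finitely        *)
(* supported functions from exponent vectors Z^n to K.                 *)
Definition expo (n : nat) := {ffun 'I_n -> int}.
Definition LPoly (n : nat) := {malg Kf[expo n]}.

Definition leval (n : nat) (f : LPoly n) (z : 'I_n -> Kf) : Kf :=
  \sum_(e <- msupp f) f@_e * \prod_(i < n) z i ^ (e i).

(* Multi-wheel set Z^{(k,r)}_m (0-based indices: l < m, a <= k;        *)
(* points with all coordinates nonzero, where Laurent polynomials are  *)
(* defined).                                                           *)
Definition in_wheel (n k r m : nat) (tau : algC) (z : 'I_n -> Kf) : Prop :=
  (forall i, z i != 0) /\
  exists (ix : nat -> nat -> 'I_n) (s : nat -> nat -> nat),
    (forall l a l' a', (l < m)%N -> (a <= k)%N -> (l' < m)%N -> (a' <= k)%N ->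
        ix l a = ix l' a' -> l = l' /\ a = a') /\
    (forall l, (l < m)%N ->
       (forall a, (a < k)%N ->
          z (ix l a.+1) = z (ix l a) * tK k r * qK k r tau ^+ s l a /\
          (s l a = 0%N -> (ix l a < ix l a.+1)%N)) /\
       (\sum_(a < k) s l a <= r - 2)%N).

Definition in_I (n k r m : nat) (tau : algC) (f : LPoly n) : Prop :=
  forall z, in_wheel n k r m tau z -> leval n f z = 0.

(* rkpos n lam i = a-1 where rho(lam)_i = (n+1)/2 - a, i.e. the number   *)
(* of j with lam_j > lam_i or (lam_j = lam_i and j < i).               *)
(* Thus rho(lam)_i = (n-1)/2 - rkpos n lam i.                            *)
Definition rkpos (n : nat) (lam : 'I_n -> int) (i : 'I_n) : nat :=
  #|[set j : 'I_n | (lam i < lam j) || ((lam j == lam i) && (j < i)%N)]|.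

(* twice rho(lambda)_i, an integer *)
Definition rho2 (n : nat) (lam : 'I_n -> int) (i : 'I_n) : int :=
  n.-1%:Z - (2 * rkpos n lam i)%:Z.

Definition upoint (n k r : nat) (tau : algC) (lam : 'I_n -> int) : 'I_n -> Kf :=
  fun i => thalf k r ^ (- rho2 n lam i) * qK k r tau ^ (- lam i).

Definition u_lam (n k r : nat) (tau : algC) (lam : 'I_n -> int) (f : LPoly n) : Kf :=
  leval n f (upoint n k r tau lam).

Definition neighborhood (n : nat) (lam : 'I_n -> int) (a b : nat) (i j : 'I_n) : bool :=
  (rho2 n lam i - rho2 n lam j == 2%:Z * (a%:Z - 1)) &&
  ((lam i - lam j <= b%:Z - 1) || ((lam i - lam j == b%:Z) && (j < i)%N)).

Definition nbset (n : nat) (lam : 'I_n -> int) (i j : 'I_n) : {set 'I_n} :=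
  [set x : 'I_n | (rkpos n lam i <= rkpos n lam x <= rkpos n lam j)%N].

Definition in_S (n k r m : nat) (lam : 'I_n -> int) : Prop :=
  exists nb : nat -> 'I_n * 'I_n,
    (forall l, (l < m)%N -> neighborhood n lam k.+1 r.-1 (nb l).1 (nb l).2) /\
    (forall l l', (l < m)%N -> (l' < m)%N -> l <> l' ->
        [disjoint nbset n lam (nb l).1 (nb l).2 & nbset n lam (nb l').1 (nb l').2]).

(* Main.v *)
Require Import Defs.
From HB Require Import structures.
From mathcomp Require Import all_boot all_order all_algebra all_field.
From mathcomp Require Import finmap.
From mathcomp Require Import monalg fraction.
From mathcomp Require Import zify.
From Stdlib Require Import ClassicalEpsilon.
Set Implicit Arguments.
Unset Strict Implicit.
Import Order.TTheory GRing.Theory Num.Theory.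
Local Open Scope ring_scope.
Lemma wK_neq0 : wK != 0.
Proof. by rewrite /wK /toK tofrac_eq0 polyX_eq0. Qed.

Lemma uK_neq0 : uK != 0.
Proof. by rewrite /uK expf_neq0 // wK_neq0. Qed.

Lemma thalf_neq0 k r : thalf k r != 0.
Proof. by rewrite /thalf expf_neq0 // wK_neq0. Qed.

Lemma tK_thalf k r : tK k r = thalf k r ^+ 2.
Proof. by rewrite /tK /thalf /uK -!exprM mulnC. Qed.

Lemma tK_neq0 k r : tK k r != 0.
Proof. by rewrite tK_thalf expf_neq0 // thalf_neq0. Qed.

Lemma tau_neq0 (r : nat) (tau : algC) : (1 < r)%N -> (r.-1).-primitive_root tau -> tau != 0.
Proof.
move=> r1 pr; apply/eqP=> t0; have := prim_expr_order pr; rewrite t0 expr0n.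
by case: r r1 {pr} => [|[|r]] //= _; move/eqP; rewrite eq_sym oner_eq0.
Qed.

Lemma qK_neq0 k r tau : tau != 0 -> qK k r tau != 0.
Proof.
move=> t0; rewrite /qK mulf_neq0 //.
  by rewrite /toK tofrac_eq0 polyC_eq0.
by rewrite invr_eq0 expf_neq0 // uK_neq0.
Qed.

Lemma toK_tau_exp (tau : algC) n : toK tau%:P ^+ n = toK (tau ^+ n)%:P.
Proof. by rewrite /toK -rmorphXn /= polyC_exp. Qed.

Lemma tq_one k r tau : (r.-1).-primitive_root tau ->
  tK k r ^+ k.+1 * qK k r tau ^+ r.-1 = 1.
Proof.
move=> pr; rewrite /tK /qK [(_ * _) ^+ r.-1]exprMn toK_tau_exp (prim_expr_order pr) /toK rmorph1 mul1r.
rewrite -!exprM exprVn -exprM.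
have e : (r.-1 %/ gg k r * k.+1 = k.+1 %/ gg k r * r.-1)%N.
  rewrite mulnC muln_divA ?dvdn_gcdr // [in RHS]mulnC muln_divA ?dvdn_gcdl //.
  by rewrite mulnC.
by rewrite e mulnA mulfV // expf_neq0 // wK_neq0.
Qed.

Lemma N_gt0 k r : (0 < k.+1 %/ gg k r)%N.
Proof. by rewrite divn_gt0 ?gcdn_gt0 // dvdn_leq // dvdn_gcdl. Qed.

Lemma qK_pow1 k r tau d : tau != 0 -> qK k r tau ^+ d = 1 -> d = 0%N.
Proof.
move=> t0; rewrite /qK exprMn toK_tau_exp exprVn -exprM /uK -exprM.
set M := (2 * _)%N.
have hw : wK ^+ M != 0 by rewrite expf_neq0 // wK_neq0.
move/(canRL (mulfK (invr_neq0 hw))); rewrite mul1r invrK /wK /toK -rmorphXn /=.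
move/eqP; rewrite tofrac_eq => /eqP/(congr1 (fun p : {poly algC} => size p)).
rewrite size_polyXn size_polyC expf_neq0 //= => -[].
rewrite /M; clear M hw; case: d => // d; have := N_gt0 k r; lia.
Qed.

Lemma qK_expz_inj k r tau (a b : int) : tau != 0 ->
  qK k r tau ^ a = qK k r tau ^ b -> a = b.
Proof.
move=> t0 e; have q0 := @qK_neq0 k r tau t0.
have : qK k r tau ^ (a - b) = 1 by rewrite expfzDr // e -expfzDr // subrr expr0z.
case: (a - b) (subrK b a) => [d|d] <-.
  move/(@qK_pow1 k r tau _ t0) => -> ; by rewrite add0r.
rewrite NegzE -invr_expz => /(canRL (@invrK _)); rewrite invr1.
by move/(@qK_pow1 k r tau _ t0).
Qed.
Unset Strict Implicit.
Import Order.TTheory GRing.Theory Num.Theory.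
Local Open Scope ring_scope.
Definition key (n : nat) (lam : 'I_n -> int) (j : 'I_n) : int := (n%:Z * lam j - (j : nat)%:Z).

Lemma above_key n (lam : 'I_n -> int) (i j : 'I_n) :
  ((lam i < lam j) || ((lam j == lam i) && (j < i)%N)) = (key lam i < key lam j).
Proof.
rewrite /key; have hi := ltn_ord i; have hj := ltn_ord j.
case: (ltrgtP (lam i) (lam j)) => h /=.
- apply/esym/idP; nia.
- apply/esym/negbTE; rewrite -leNgt; nia.
- rewrite h; apply/idP/idP; lia.
Qed.

Definition R (n : nat) (kp : 'I_n -> int) (i : 'I_n) : nat := #|[set j : 'I_n | kp i < kp j]|.

Lemma rkpos_R n lam i : rkpos n lam i = R (key lam) i.
Proof. by rewrite /rkpos /R; apply: eq_card => j; rewrite !inE above_key. Qed.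

Lemma key_inj n (lam : 'I_n -> int) : injective (key lam).
Proof.
move=> i j; rewrite /key => e; have hi := ltn_ord i; have hj := ltn_ord j.
case: (ltrgtP (lam i) (lam j)) => h.
- exfalso; nia.
- exfalso; nia.
- apply: val_inj => /=; rewrite h in e; lia.
Qed.

Lemma R_lt n (kp : 'I_n -> int) i j : kp i < kp j -> (R kp j < R kp i)%N.
Proof.
move=> h; apply: proper_card; apply/properP; split.
  apply/subsetP => x; rewrite !inE => hx; exact: lt_trans hx.
by exists j; rewrite !inE ?h ?ltxx.
Qed.

Lemma R_inj n (kp : 'I_n -> int) : injective kp -> injective (R kp).
Proof.
move=> ki i j e; case: (ltrgtP (kp i) (kp j)) => h.
- by have := R_lt h; rewrite e ltnn.
- by have := R_lt h; rewrite e ltnn.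
- exact: ki.
Qed.

Lemma R_ltn n (kp : 'I_n -> int) i : (R kp i < n)%N.
Proof.
rewrite /R -[X in (_ < X)%N]card_ord -cardsT; apply: proper_card; apply/properP; split.
  exact: subsetT.
by exists i; rewrite ?inE ?ltxx.
Qed.

Lemma R_surj n (kp : 'I_n -> int) p : injective kp -> (p < n)%N ->
  exists i, R kp i = p.
Proof.
move=> ki hp; pose f (i : 'I_n) : 'I_n := Ordinal (R_ltn kp i).
have fi : injective f by move=> i j /(congr1 val) /= /(R_inj ki).
have [g fK gK] := injF_bij fi.
by exists (g (Ordinal hp)); have := gK (Ordinal hp) => /(congr1 val).
Qed.

Lemma R_succ n (kp : 'I_n -> int) i i' : injective kp -> kp i < kp i' ->
  (forall j, kp i < kp j -> kp j < kp i' -> False) -> R kp i = (R kp i').+1.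
Proof.
move=> ki h1 h2; rewrite /R.
have -> : [set j | kp i < kp j] = i' |: [set j | kp i' < kp j].
  apply/setP => j; rewrite !inE; apply/idP/idP.
    move=> hj; case: (ltrgtP (kp j) (kp i')) => h.
    - by case: (h2 _ hj h).
    - by rewrite orbT.
    - by rewrite (ki _ _ h) eqxx.
  case/orP=> [/eqP -> //|]; exact: lt_trans.
by rewrite cardsU1 inE ltxx.
Qed.

Lemma R_ltr n (kp : 'I_n -> int) i j : injective kp -> (R kp i < R kp j)%N -> kp j < kp i.
Proof.
move=> ki h; case: (ltrgtP (kp i) (kp j)) => // h'.
- by have := R_lt h'; rewrite ltnNge ltnW.
- by rewrite (ki _ _ h') ltnn in h.
Qed.

Lemma upoint_shift n k r tau (lam : 'I_n -> int) i j (a o : nat) : tau != 0 ->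
  rkpos n lam j = (rkpos n lam i + a)%N -> lam j = lam i - o%:Z ->
  upoint n k r tau lam j = upoint n k r tau lam i * tK k r ^+ a * qK k r tau ^+ o.
Proof.
move=> t0 hr hl; rewrite /upoint /rho2 hr hl.
have -> : - ((n.-1)%:Z - (2 * (rkpos n lam i + a))%:Z) =
          - ((n.-1)%:Z - (2 * rkpos n lam i)%:Z) + (2 * a)%N%:Z by lia.
have -> : - (lam i - o%:Z) = - lam i + o%:Z by lia.
rewrite expfzDr ?thalf_neq0 // expfzDr ?qK_neq0 // tK_thalf -exprM.
by rewrite -!mulrA; congr (_ * _); rewrite mulrCA.
Qed.

Section Dir1.
Variables (n k r : nat) (tau : algC) (lam : 'I_n -> int) (i0 : 'I_n).
Hypothesis t0 : tau != 0.


Definition sig (p : nat) : 'I_n := odflt i0 [pick i | rkpos n lam i == p].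

Lemma sigK p : (p < n)%N -> rkpos n lam (sig p) = p.
Proof.
move=> hp; rewrite /sig; case: pickP => [i /eqP //|].
have [i hi] := R_surj (@key_inj n lam) hp.
by move/(_ i); rewrite rkpos_R hi eqxx.
Qed.

Lemma sig_rk i : sig (rkpos n lam i) = i.
Proof.
apply: (R_inj (@key_inj n lam)); rewrite -!rkpos_R.
by apply: sigK; rewrite rkpos_R R_ltn.
Qed.

Definition dd (p : nat) : nat := absz (lam (sig p) - lam (sig p.+1)).

Lemma step p : (p.+1 < n)%N ->
  [/\ lam (sig p.+1) = lam (sig p) - (dd p)%:Z,
      (dd p = 0%N -> (sig p < sig p.+1)%N) &
      upoint n k r tau lam (sig p.+1) = upoint n k r tau lam (sig p) * tK k r * qK k r tau ^+ dd p].
Proof.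
move=> hp; have hlt : (rkpos n lam (sig p) < rkpos n lam (sig p.+1))%N by rewrite !sigK // ltnW.
rewrite !rkpos_R in hlt; have := R_ltr (@key_inj n lam) hlt.
rewrite -above_key /dd => h.
have hl : lam (sig p.+1) = lam (sig p) - (absz (lam (sig p) - lam (sig p.+1)))%:Z.
  case/orP: h => [h|/andP [/eqP e _]]; lia.
split=> //.
- move/eqP; rewrite absz_eq0 subr_eq0 => /eqP e.
  by case/orP: h => [|/andP [] //]; rewrite e ltxx.
- rewrite -[tK k r]expr1; apply: upoint_shift => //.
  by rewrite !sigK // ?addn1 // ltnW.
Qed.

Lemma tele b c : (b + c < n)%N ->
  lam (sig (b + c)) = lam (sig b) - (\sum_(c' < c) dd (b + c'))%N%:Z.
Proof.
elim: c => [|c IH] hbc; first by rewrite addn0 big_ord0 subr0.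
have hb : ((b + c).+1 < n)%N by rewrite -addnS.
have [h1 _ _] := step hb.
rewrite addnS h1 IH; last by apply: ltnW; rewrite -addnS.
rewrite big_ord_recr /= PoszD opprD addrA //.
Qed.

Lemma rk_nb i j a b : neighborhood n lam a.+1 b i j ->
  rkpos n lam j = (rkpos n lam i + a)%N.
Proof.
case/andP=> /eqP h _; move: h; rewrite /rho2; lia.
Qed.


Lemma chain_nb i j : (1 < r)%N -> (r.-1).-primitive_root tau ->
  neighborhood n lam k.+1 r.-1 i j ->
  exists c : nat -> 'I_n, exists s : nat -> nat,
  [/\ forall a, (a <= k)%N -> c a \in nbset n lam i j,
      forall a a', (a <= k)%N -> (a' <= k)%N -> c a = c a' -> a = a',
      forall a, (a < k)%N ->
        upoint n k r tau lam (c a.+1) = upoint n k r tau lam (c a) * tK k r * qK k r tau ^+ s a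
        /\ (s a = 0%N -> (c a < c a.+1)%N)
    & (\sum_(a < k) s a <= r - 2)%N].
Proof.
move=> r1 pr hnb.
have hrk := rk_nb hnb.
set b := rkpos n lam i in hrk.
have hjn : (b + k < n)%N by rewrite -hrk rkpos_R R_ltn.
have si : sig b = i by rewrite /b sig_rk.
have sj : sig (b + k) = j by rewrite -hrk sig_rk.
have hsum : lam i - lam j = (\sum_(c < k) dd (b + c))%N%:Z.
  have := tele hjn; rewrite si sj => ->; lia.
have nbs : forall p, (p <= k)%N -> sig (b + p) \in nbset n lam i j.
  move=> p hp; rewrite inE sigK ?hrk /b; lia.
case/andP: hnb => _ /orP [hA | /andP [/eqP hB ji]].
- exists (fun a => sig (b + a)), (fun a => dd (b + a)); split.
  + exact: nbs.
  + move=> a a' ha ha' /(congr1 (rkpos n lam)); rewrite !sigK; lia.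
  + move=> a ha; have hb : ((b + a).+1 < n)%N by lia.
    by have [_ h2 h3] := step hb; rewrite -addnS in h2 h3; split.
  + move: hA; rewrite hsum; lia.
have [a0 ha0 da0] : exists2 a0, (a0 < k)%N & (0 < dd (b + a0))%N.
  case: (boolP [exists a : 'I_k, 0 < dd (b + a)]%N) => [/existsP [a ha]|].
    by exists a.
  rewrite negb_exists => /forallP hall; exfalso.
  have : (\sum_(c < k) dd (b + c) = 0)%N.
    by apply: big1 => c _; move: (hall c); rewrite lt0n negbK => /eqP.
  move: hsum; rewrite hB; lia.
pose pi a := if (a < k - a0)%N then (a0 + 1 + a)%N else (a - (k - a0))%N.
have piS : forall a, (a <= k)%N -> (pi a <= k)%N.
  by move=> a; rewrite /pi; case: ifP; lia.
have piI : forall a a', (a <= k)%N -> (a' <= k)%N -> pi a = pi a' -> a = a'.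
  by move=> a a'; rewrite /pi; case: ifP; case: ifP; lia.
exists (fun a => sig (b + pi a)), (fun a => if pi a == k then 0%N else dd (b + pi a)); split.
- move=> a ha; exact: nbs (piS a ha).
- move=> a a' ha ha' e; apply: piI => //; move: e.
  have := piS a ha; have := piS a' ha'.
  move=> h1 h2 /(congr1 (rkpos n lam)); rewrite !sigK; lia.
- move=> a ha; case: (eqVneq (pi a) k) => hpa.
  + have pa1 : pi a.+1 = 0%N.
      by move: hpa; rewrite /pi; case: ifP; case: ifP; lia.
    rewrite pa1 hpa addn0 sj si; split; last by [].
    have hl : lam j = lam i - (r.-1)%:Z by rewrite -hB; lia.
    rewrite (@upoint_shift n k r tau lam i j k r.-1 t0 hrk hl) expr0 mulr1.
    have H : forall x : Kf, x * tK k r ^+ k * qK k r tau ^+ r.-1 * tK k r = x.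
      by move=> x; rewrite -!mulrA [in X in _ * X]mulrCA -exprSr [_ * _ ^+ _]mulrC tq_one // mulr1.
    by rewrite H.
  + have pa1 : pi a.+1 = (pi a).+1.
      by move: hpa; rewrite /pi; case: ifP; case: ifP; lia.
    rewrite pa1.
    have hb : ((b + pi a).+1 < n)%N by have := piS a (ltnW ha); lia.
    by have [_ h2 h3] := step hb; rewrite -addnS in h2 h3; split.
- pose F c := if c == k then 0%N else dd (b + c).
  have e1 : (\sum_(a < k.+1) F (pi a) = \sum_(c < k.+1) F c)%N.
    have hinj : injective (fun x : 'I_k.+1 => (inord (pi x) : 'I_k.+1)).
      move=> x y /(congr1 val) /=.
      have hx : (x <= k)%N := ltn_ord x.
      have hy : (y <= k)%N := ltn_ord y.
      rewrite !inordK ?ltnS ?piS //.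
      by move/(piI x y hx hy) => h; apply: val_inj.
    rewrite [RHS](reindex_inj hinj) /=; apply: eq_bigr => x _.
    have hx : (x <= k)%N := ltn_ord x.
    rewrite inordK //; rewrite ltnS; exact: piS.
  rewrite big_ord_recr [in RHS]big_ord_recr /= in e1.
  have pk : pi k = a0 by rewrite /pi ltnNge leq_subr /=; lia.
  rewrite pk /F eqxx addn0 (ltn_eqF ha0) in e1.
  have e2 : (\sum_(c < k) (if (c : nat) == k then 0 else dd (b + c)) = \sum_(c < k) dd (b + c))%N.
    by apply: eq_bigr => c _; rewrite (ltn_eqF (ltn_ord c)).
  rewrite e2 in e1; move: hsum; rewrite hB -e1.
  have -> : (\sum_(a < k) (if pi a == k then 0 else dd (b + pi a)) = \sum_(a < k) F (pi a))%N by [].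
  lia.
Qed.

End Dir1.

Lemma dir1_wheel n k r m tau (lam : 'I_n -> int) : (0 < n)%N -> (1 < r)%N ->
  (r.-1).-primitive_root tau -> in_S n k r m lam ->
  in_wheel n k r m tau (upoint n k r tau lam).
Proof.
move=> n0 r1 pr [nb [hnb hdis]].
have t0 := tau_neq0 r1 pr.
pose i0 : 'I_n := Ordinal n0.
pose Q l (cs : (nat -> 'I_n) * (nat -> nat)) :=
  (l < m)%N ->
  [/\ forall a, (a <= k)%N -> cs.1 a \in nbset n lam (nb l).1 (nb l).2,
      forall a a', (a <= k)%N -> (a' <= k)%N -> cs.1 a = cs.1 a' -> a = a',
      forall a, (a < k)%N ->
        upoint n k r tau lam (cs.1 a.+1) = upoint n k r tau lam (cs.1 a) * tK k r * qK k r tau ^+ cs.2 a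
        /\ (cs.2 a = 0%N -> (cs.1 a < cs.1 a.+1)%N)
    & (\sum_(a < k) cs.2 a <= r - 2)%N].
have hQ : forall l, exists cs, Q l cs.
  move=> l; case: (ltnP l m) => hl; last first.
    by exists (fun _ => i0, fun _ => 0%N) => h; rewrite ltnNge hl in h.
  have [c [s hc]] := chain_nb i0 t0 r1 pr (hnb l hl).
  by exists (c, s).
pose F l := proj1_sig (constructive_indefinite_description _ (hQ l)).
have FQ l : Q l (F l) := proj2_sig (constructive_indefinite_description _ (hQ l)).
split.
  by move=> i; rewrite /upoint mulf_neq0 // expfz_neq0 ?thalf_neq0 ?qK_neq0.
exists (fun l a => (F l).1 a), (fun l a => (F l).2 a); split.
  move=> l a l' a' hl ha hl' ha' e.
  have [hA1 hA2 _ _] := FQ l hl; have [hB1 _ _ _] := FQ l' hl'.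
  case: (eqVneq l l') => hll.
    by subst l'; split => //; exact: hA2 e.
  have := hdis _ _ hl hl' (elimN eqP hll).
  by move/disjointFr => /(_ _ (hA1 a ha)); rewrite e hB1.
move=> l hl; have [_ _ h3 h4] := FQ l hl; split => //.
Qed.
Lemma laurent0 (K : fieldType) (I : eqType) (s : seq I) (a : I -> K) (d : I -> int)
  (D : nat) (V : seq K) :
  (forall e, e \in s -> (absz (d e) <= D)%N) -> uniq V -> (2 * D < size V)%N ->
  (forall v, v \in V -> v != 0 /\ \sum_(e <- s) a e * v ^ d e = 0) ->
  forall v, v != 0 -> \sum_(e <- s) a e * v ^ d e = 0.
Proof.
move=> hd uV sV hV.
pose p : {poly K} := \sum_(e <- s) a e *: 'X^(absz (d e + D%:Z)).
have hp : forall v, v != 0 -> p.[v] = v ^+ D * \sum_(e <- s) a e * v ^ d e.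
  move=> v v0; rewrite horner_sum mulr_sumr; apply: eq_big_seq => e he.
  rewrite hornerZ hornerXn.
  have -> : v ^+ absz (d e + D%:Z) = v ^ (d e + D%:Z).
    have he' := hd e he.
    have h : (absz (d e + D%:Z))%:Z = d e + D%:Z by lia.
    by rewrite -[in RHS]h.
  rewrite expfzDr //; change (v ^ D%:Z) with (v ^+ D).
  by rewrite mulrA mulrC.
have sp : (size p <= (2 * D).+1)%N.
  apply: leq_trans (size_sum _ _ _) _; apply/bigmax_leqP_seq => e' he' _.
  apply: leq_trans (size_scale_leq _ _) _; rewrite size_polyXn.
  have := hd e' he'; lia.
have p0 : p = 0.
  apply/eqP; apply: contraLR sV => pn0; rewrite -leqNgt -ltnS.
  apply: leq_trans (max_poly_roots pn0 _ uV) sp.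
  apply/allP => v hv; have [v0 hs] := hV v hv.
  by rewrite /root hp // hs mulr0.
move=> v v0; have := hp v v0; rewrite p0 horner0 => /esym /eqP.
by rewrite mulf_eq0 expf_eq0 (negbTE v0) andbF /= => /eqP.
Qed.

Lemma prod_split (I : finType) (K : fieldType) (v : K) (b : I -> bool) (w c : I -> K)
  (e : I -> int) : v != 0 ->
  \prod_i ((if b i then v else w i) * c i) ^ e i =
  v ^ (\sum_i (if b i then e i else 0)) *
  \prod_i (if b i then c i ^ e i else (w i * c i) ^ e i).
Proof.
move=> v0.
have h1 : forall i, ((if b i then v else w i) * c i) ^ e i =
   v ^ (if b i then e i else 0) * (if b i then c i ^ e i else (w i * c i) ^ e i).
  by move=> i; case: (b i); rewrite ?expfzMl ?expr0z ?mul1r.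
rewrite (eq_bigr _ (fun i _ => h1 i)) big_split /=; congr (_ * _).
elim/big_rec2: _ => [|i x y _ ->]; first by rewrite expr0z.
by rewrite expfzDr.
Qed.

Lemma absz_sum_seq (I : Type) (t : seq I) (g : I -> int) :
  (absz (\sum_(i <- t) g i)%R <= \sum_(i <- t) absz (g i))%N.
Proof.
elim: t => [|i t IH]; first by rewrite !big_nil.
rewrite !big_cons; set S := (\sum_(j <- t) g j)%R; set S' := (\sum_(j <- t) absz (g j))%N.
move: IH; rewrite -/S -/S'; lia.
Qed.

Lemma absz_sum (I : finType) (g : I -> int) :
  (absz (\sum_i g i)%R <= \sum_i absz (g i))%N.
Proof. exact: absz_sum_seq. Qed.

Lemma leval_ext n (f : LPoly n) (z z' : 'I_n -> Kf) : (forall i, z i = z' i) ->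
  leval n f z = leval n f z'.
Proof.
move=> h; rewrite /leval; apply: eq_bigr => e _; congr (_ * _).
by apply: eq_bigr => i _; rewrite h.
Qed.

Section Dir2.
Variables (n k r m : nat) (tau : algC) (ix : nat -> nat -> 'I_n) (s : nat -> nat -> nat).
Hypothesis t0 : tau != 0.
Hypothesis r1 : (1 < r)%N.
Hypothesis hdist : forall l a l' a', (l < m)%N -> (a <= k)%N -> (l' < m)%N -> (a' <= k)%N ->
        ix l a = ix l' a' -> l = l' /\ a = a'.
Hypothesis hinc : forall l a, (l < m)%N -> (a < k)%N -> s l a = 0%N -> (ix l a < ix l a.+1)%N.
Hypothesis hsum : forall l, (l < m)%N -> (\sum_(a < k) s l a <= r - 2)%N.

Definition pk (j : 'I_n) := [pick p : 'I_m * 'I_k.+1 | ix p.1 p.2 == j].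
Definition head (j : 'I_n) : 'I_n := if pk j is Some p then ix p.1 0 else j.
Definition pos (j : 'I_n) : nat := if pk j is Some p then (p.2 : nat) else 0%N.
Definition off (j : 'I_n) : nat := if pk j is Some p then (\sum_(b < p.2) s p.1 b)%N else 0%N.

Lemma chain_ix l a : (l < m)%N -> (a <= k)%N ->
  [/\ head (ix l a) = ix l 0, pos (ix l a) = a & off (ix l a) = (\sum_(b < a) s l b)%N].
Proof.
move=> hl ha; rewrite /head /pos /off /pk; case: pickP => [p /eqP hp | none].
  have hp2 : (p.2 <= k)%N := ltn_ord p.2.
  have [e1 e2] := hdist (ltn_ord p.1) hp2 hl ha hp.
  by rewrite e1 e2.
by have := none (Ordinal hl, Ordinal (ha : (a < k.+1)%N)); rewrite /= eqxx.
Qed.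

Lemma chainP j :
  (exists l a, [/\ (l < m)%N, (a <= k)%N & j = ix l a]) \/
  [/\ head j = j, pos j = 0%N, off j = 0%N &
      forall l a, (l < m)%N -> (a <= k)%N -> ix l a != j].
Proof.
rewrite /head /pos /off /pk; case: pickP => [p /eqP hp | none].
  by left; exists p.1, p.2; split => //; rewrite -ltnS.
right; split => // l a hl ha; have := none (Ordinal hl, Ordinal (ha : (a < k.+1)%N)).
by move=> /= ->.
Qed.

Lemma S_mono l a a' : (a <= a')%N -> (\sum_(b < a) s l b <= \sum_(b < a') s l b)%N.
Proof.
move/subnK => <-; elim: (a' - a)%N => [|c IH] //.
by rewrite addSn big_ord_recr /=; apply: leq_trans IH (leq_addr _ _).
Qed.

Lemma offb j : (off j <= r - 2)%N.
Proof.
case: (chainP j) => [[l [a [hl ha ->]]]|[_ _ -> _]] //.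
have [_ _ ->] := chain_ix hl ha.
exact: leq_trans (S_mono l ha) (hsum hl).
Qed.

Lemma head_head j : [/\ head (head j) = head j, pos (head j) = 0%N & off (head j) = 0%N].
Proof.
case: (chainP j) => [[l [a [hl ha ej]]]|[hj hp ho _]]; last by rewrite !hj hp ho.
rewrite ej; have [-> _ _] := chain_ix hl ha.
by have [-> -> ->] := chain_ix hl (leq0n k); rewrite big_ord0.
Qed.

Variable B : nat.
Definition MM : nat := (B + r + 2)%N.
Definition lamx (x : 'I_n -> nat) (j : 'I_n) : int :=
  (MM * head j + x (head j))%N%:Z - (off j)%:Z.
Definition key0 (j : 'I_n) : int := - ((n * off j)%N%:Z) - (j : nat)%:Z.

Lemma sep_aux (nn M hi hj xi xj oi oj i j : nat) : (i < nn)%N -> (j < nn)%N ->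
  (hi < hj)%N -> (xi + oj < M)%N ->
  (nn%:Z * ((M * hi + xi)%N%:Z - oi%:Z) - i%:Z < nn%:Z * ((M * hj + xj)%N%:Z - oj%:Z) - j%:Z).
Proof.
move=> hi' hj' hh hx.
have hC : (M * hi + M <= M * hj)%N by rewrite addnC -mulnS leq_mul2l hh orbT.
have hE : 1 <= ((M * hj + xj)%N%:Z - oj%:Z) - ((M * hi + xi)%N%:Z - oi%:Z) by lia.
set E := (_ - _) - _ in hE.
have : nn%:Z <= nn%:Z * E by nia.
rewrite /E; lia.
Qed.

Lemma sep x (hx : forall h, (x h < B)%N) i j :
  (key (lamx x) i < key (lamx x) j) =
  ((head i < head j)%N || ((head i == head j) && (key0 i < key0 j))).
Proof.
rewrite /key /lamx /key0.
have := hx (head i); have := hx (head j); have := offb i; have := offb j.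
have := ltn_ord i; have := ltn_ord j; rewrite /MM.
case: (ltngtP (head i) (head j)) => h.
- move=> *; apply/idP; apply: sep_aux => //; lia.
- have hne : (head i == head j) = false by apply/eqP => e; rewrite e ltnn in h.
  rewrite hne /= => *; apply/negbTE; rewrite -leNgt; apply/ltW; apply: sep_aux => //; lia.
- have e : head i = head j by apply: val_inj.
  by rewrite e eqxx /=; move=> *; apply/idP/idP; lia.
Qed.


Lemma rk_inv x x' (hx : forall h, (x h < B)%N) (hx' : forall h, (x' h < B)%N) i :
  rkpos n (lamx x) i = rkpos n (lamx x') i.
Proof. by rewrite !rkpos_R /R; apply: eq_card => j; rewrite !inE !sep. Qed.

Lemma key0_step l a : (l < m)%N -> (a < k)%N -> key0 (ix l a.+1) < key0 (ix l a).
Proof.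
move=> hl ha; rewrite /key0.
have [_ _ ->] := chain_ix hl ha.
have [_ _ ->] := chain_ix hl (ltnW ha).
rewrite big_ord_recr /=.
have := ltn_ord (ix l a); have := ltn_ord (ix l a.+1).
case: (posnP (s l a)) => hs.
  have := hinc hl ha hs; rewrite hs; lia.
nia.
Qed.

Lemma key0_mono l b b' : (l < m)%N -> (b < b')%N -> (b' <= k)%N ->
  key0 (ix l b') < key0 (ix l b).
Proof.
move=> hl hb; elim: b' hb => [//|b' IH] hb hb'.
have st := key0_step hl hb'.
case: (ltngtP b b') => h.
- exact: lt_trans st (IH h (ltnW hb')).
- by rewrite ltnS leqNgt h in hb.
- by rewrite h.
Qed.

Lemma rk_step x (hx : forall h, (x h < B)%N) l a : (l < m)%N -> (a < k)%N ->
  rkpos n (lamx x) (ix l a.+1) = (rkpos n (lamx x) (ix l a)).+1.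
Proof.
move=> hl ha; rewrite !rkpos_R; apply: R_succ; first exact: key_inj.
  have [h1 _ _] := chain_ix hl ha; have [h2 _ _] := chain_ix hl (ltnW ha).
  by rewrite sep // h1 h2 eqxx ltnn key0_step.
move=> j; have [h1 _ _] := chain_ix hl ha; have [h2 _ _] := chain_ix hl (ltnW ha).
rewrite !sep // h1 h2.
case: (ltngtP (ix l 0) (head j)) => hh /=.
- by move=> _ /andP [/eqP e _]; rewrite e ltnn in hh.
- by move=> /andP [/eqP e _] _; rewrite e ltnn in hh.
have ehj : head j = ix l 0 by apply: val_inj.
rewrite ehj eqxx /= => k1 k2.
have [b hb ej] : exists2 b, (b <= k)%N & j = ix l b.
  case: (chainP j) => [[l' [b [hl' hb ej]]]|[hj _ _ hn]].
    have [e _] := chain_ix hl' hb; rewrite -ej ehj in e.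
    have [ll _] := hdist hl (leq0n k) hl' (leq0n k) e.
    by exists b => //; rewrite ej ll.
  by exfalso; have := hn l 0%N hl (leq0n k); rewrite -hj ehj eqxx.
rewrite ej in k1 k2.
case: (ltngtP b a.+1) => h.
- case: (ltngtP b a) => h'.
  + by have := key0_mono hl h' (ltnW ha); rewrite ltNge ltW.
  + by rewrite ltnS leqNgt h' in h.
  + by rewrite h' ltxx in k2.
- by have := key0_mono hl h hb; rewrite ltNge ltW.
- by rewrite h ltxx in k1.
Qed.

Lemma rk_chain x (hx : forall h, (x h < B)%N) l a : (l < m)%N -> (a <= k)%N ->
  rkpos n (lamx x) (ix l a) = (rkpos n (lamx x) (ix l 0) + a)%N.
Proof.
move=> hl; elim: a => [|a IH] ha; first by rewrite addn0.
by rewrite rk_step // IH ?addnS // ltnW.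
Qed.


Lemma upoint_P x (hx : forall h, (x h < B)%N) j :
  upoint n k r tau (lamx x) j =
  upoint n k r tau (lamx x) (head j) * tK k r ^+ pos j * qK k r tau ^+ off j.
Proof.
case: (chainP j) => [[l [a [hl ha ->]]]|[-> -> -> _]]; last by rewrite !expr0 !mulr1.
have [h1 h2 h3] := chain_ix hl ha; rewrite h1 h2 h3.
apply: upoint_shift => //; first exact: rk_chain.
have [h1' _ h3'] := chain_ix hl (leq0n k).
rewrite /lamx h1 h1' h3 h3' big_ord0; lia.
Qed.

Lemma lamx_S x (hx : forall h, (x h < B)%N) : in_S n k r m (lamx x).
Proof.
exists (fun l => (ix l 0, ix l k)); split.
  move=> l hl /=; rewrite /neighborhood /rho2 (rk_chain hx hl (leqnn k)).
  apply/andP; split; first by apply/eqP; lia.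
  apply/orP; left.
  have [h1 _ h3] := chain_ix hl (leqnn k).
  have [h1' _ h3'] := chain_ix hl (leq0n k).
  rewrite /lamx h1 h1' h3 h3' big_ord0.
  have := hsum hl; lia.
move=> l l' hl hl' hll; rewrite /disjoint; apply/pred0P => y /=.
apply/negbTE/negP => /andP [].
have inch : forall l0, (l0 < m)%N -> y \in nbset n (lamx x) (ix l0 0) (ix l0 k) ->
    exists2 a, (a <= k)%N & y = ix l0 a.
  move=> l0 hl0; rewrite inE (rk_chain hx hl0 (leqnn k)) => /andP [y1 y2].
  exists (rkpos n (lamx x) y - rkpos n (lamx x) (ix l0 0))%N; first lia.
  apply: (R_inj (@key_inj n (lamx x))); rewrite -!rkpos_R rk_chain //; lia.
move=> yl yl'; have [a ha ea] := inch _ hl yl; have [a' ha' ea'] := inch _ hl' yl'.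
have e : ix l a = ix l' a' by rewrite -ea -ea'.
by have [] := hdist hl ha hl' ha' e.
Qed.


Variable f : LPoly n.
Variable D : nat.
Hypothesis hBD : B = (2 * D).+1.
Hypothesis hD : forall e, e \in msupp f -> (\sum_i absz (e i) <= D)%N.
Hypothesis Hf : forall lam : 'I_n -> int, in_S n k r m lam -> u_lam n k r tau lam f = 0.

Definition x0 : 'I_n -> nat := fun _ => 0%N.
Lemma x0B h : (x0 h < B)%N. Proof. by rewrite hBD. Qed.

Definition Pt (y : 'I_n -> Kf) (j : 'I_n) : Kf :=
  y (head j) * tK k r ^+ pos j * qK k r tau ^+ off j.

Definition gridval (h : 'I_n) (v : nat) : Kf :=
  thalf k r ^ (- rho2 n (lamx x0) h) * qK k r tau ^ (- ((MM * h + v)%N%:Z)).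

Lemma gridval_neq0 h v : gridval h v != 0.
Proof. by rewrite mulf_neq0 // expfz_neq0 ?thalf_neq0 ?qK_neq0. Qed.

Lemma gridval_inj h : injective (gridval h).
Proof.
move=> u u'; rewrite /gridval => /(mulfI (expfz_neq0 _ (thalf_neq0 k r))).
by move/(qK_expz_inj t0) => e; apply/eqP; rewrite -(eqn_add2l (MM * h)); apply/eqP; lia.
Qed.

Lemma upoint_head x (hx : forall h, (x h < B)%N) j :
  upoint n k r tau (lamx x) (head j) = gridval (head j) (x (head j)).
Proof.
rewrite /upoint /gridval /rho2 (rk_inv hx x0B); congr (_ * _).
have [h1 _ h2] := head_head j.
by rewrite /lamx h1 h2 subr0.
Qed.

Lemma base x (hx : forall h, (x h < B)%N) y : (forall h, y h = gridval h (x h)) ->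
  leval n f (Pt y) = 0.
Proof.
move=> hy; have := Hf (lamx_S hx); rewrite /u_lam => <-.
apply: leval_ext => j; rewrite /Pt hy -upoint_head //.
by rewrite -upoint_P.
Qed.

Lemma decomp y h v : v != 0 ->
  leval n f (Pt (fun j => if j == h then v else y j)) =
  \sum_(e <- msupp f)
    (f@_e * \prod_i (if head i == h then (tK k r ^+ pos i * qK k r tau ^+ off i) ^ e i
                     else (y (head i) * (tK k r ^+ pos i * qK k r tau ^+ off i)) ^ e i))
    * v ^ (\sum_i (if head i == h then e i else 0)).
Proof.
move=> v0; rewrite /leval; apply: eq_bigr => e _.
rewrite /Pt.
have -> : \prod_(i < n) ((if head i == h then v else y (head i)) * tK k r ^+ pos i *
            qK k r tau ^+ off i) ^ e i =
          \prod_(i < n) ((if head i == h then v else y (head i)) *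
            (tK k r ^+ pos i * qK k r tau ^+ off i)) ^ e i.
  by apply: eq_bigr => i _; rewrite mulrA.
by rewrite prod_split // mulrCA mulrC.
Qed.

Lemma indT N : forall T : {set 'I_n}, (#|T| <= N)%N ->
  forall x, (forall h, (x h < B)%N) ->
  forall y, (forall h, y h != 0) -> (forall h, h \notin T -> y h = gridval h (x h)) ->
  leval n f (Pt y) = 0.
Proof.
elim: N => [|N IH] T hT x hx y y0 hy.
  apply: (base hx) => h; apply: hy.
  by move: hT; rewrite leqn0 cards_eq0 => /eqP ->; rewrite inE.
case: (set_0Vmem T) => [T0|[h hh]].
  by apply: (base hx) => h; apply: hy; rewrite T0 inE.
pose T' := T :\ h.
have hT' : (#|T'| <= N)%N by move: hT; rewrite /T' (cardsD1 h T) hh.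
pose V := [seq gridval h u | u <- iota 0 B].
have key : forall v, v \in V -> v != 0 /\
    leval n f (Pt (fun j => if j == h then v else y j)) = 0.
  move=> v /mapP [u hu ->]; split; first exact: gridval_neq0.
  rewrite mem_iota add0n in hu.
  apply: (IH T' hT' (fun j => if j == h then u else x j)).
  - by move=> j; case: eqP.
  - by move=> j; case: ifP => _; [exact: gridval_neq0 | exact: y0].
  - move=> j; rewrite /T' !inE negb_and negbK.
    case: eqP => [-> //|hj] /= hjT; exact: hy.
have -> : leval n f (Pt y) = leval n f (Pt (fun j => if j == h then y h else y j)).
  by apply: leval_ext => j; rewrite /Pt; case: eqP => [->|].
rewrite (decomp _ _ (y0 h)).
apply: (@laurent0 _ _ _ _ _ D V).
- move=> e he; apply: leq_trans (absz_sum _) _; apply: leq_trans (hD he).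
  by apply: leq_sum => i _; case: ifP.
- rewrite map_inj_uniq ?iota_uniq //; exact: gridval_inj.
- by rewrite size_map size_iota hBD.
- by move=> v hv; have [v0 hv0] := key v hv; split => //; rewrite -decomp.
- exact: y0.
Qed.

End Dir2.

Theorem proposition6p1 (n k r : nat) (tau : algC) (m : nat) :
  (2 <= n)%N -> (1 <= k <= n.-1)%N -> (2 <= r)%N ->
  (r.-1).-primitive_root tau -> (1 <= m)%N ->
  forall f : LPoly n,
    in_I n k r m tau f <->
    (forall lam : 'I_n -> int, in_S n k r m lam -> u_lam n k r tau lam f = 0).
Proof.
move=> n2 _ r2 pr _ f.
have r1 : (1 < r)%N := r2.
have t0 := tau_neq0 r1 pr.
split.
  move=> hI lam hS; rewrite /u_lam; apply: hI; apply: dir1_wheel => //.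
  exact: leq_trans n2.
move=> Hf z [z0 [ix [s [hd hch]]]].
have hinc : forall l a, (l < m)%N -> (a < k)%N -> s l a = 0%N -> (ix l a < ix l a.+1)%N.
  by move=> l a hl ha; have [h1 _] := hch l hl; have [_ h] := h1 a ha.
have hsum : forall l, (l < m)%N -> (\sum_(a < k) s l a <= r - 2)%N.
  by move=> l hl; have [_ h] := hch l hl.
pose D := (\max_(e <- msupp f) \sum_i absz (e i))%N.
have hD : forall e, e \in msupp f -> (\sum_i absz (e i) <= D)%N.
  by move=> e he; apply: (leq_bigmax_seq e he).
have zc : forall l a, (l < m)%N -> (a <= k)%N ->
    z (ix l a) = z (ix l 0%N) * tK k r ^+ a * qK k r tau ^+ (\sum_(b < a) s l b)%N.
  move=> l a hl; elim: a => [|a IH] ha; first by rewrite big_ord0 !expr0 !mulr1.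
  have [h1 _] := hch l hl; have [e _] := h1 a ha.
  rewrite e (IH (ltnW ha)) big_ord_recr /= exprSr exprD.
  by rewrite -!mulrA; congr (_ * _); rewrite !mulrA; congr (_ * _); rewrite mulrAC.
have hz : forall j, z j = Pt k r m tau ix s z j.
  move=> j; rewrite /Pt; case: (chainP k m ix s j) => [[l [a [hl ha ->]]]|[-> -> -> _]];
    last by rewrite !expr0 !mulr1.
  have [-> -> ->] := chain_ix s hd hl ha; exact: zc.
rewrite (leval_ext f hz).
apply: (@indT n k r m tau ix s t0 r1 hd hinc hsum (2 * D).+1 f D (erefl _) hD Hf
  #|[set: 'I_n]| setT (leqnn _) (fun _ => 0%N)).
- by [].
- exact: z0.
- by move=> h; rewrite inE.
Qed.
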